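(* Let $p$ be a nonnegative integer. Every subcubic tree with $p$ leaves contains $\lfloor p/2\rfloor$ pairwise vertex-disjoint leaf-to-leaf paths.
   Context: A graph is subcubic if every vertex has degree at most $3$. A leaf-to-leaf path in a tree is a path whose two endvertices are distinct leaves of the tree. *)

(* Defs.v *)
(* finite simple graphs as symmetric irreflexive relations. *)
From mathcomp Require Import all_boot.
Set Implicit Arguments. Unset Strict Implicit. Unset Printing Implicit Defensive.

Section Graphs.
Variables (T : finType) (e : rel T).

Definition deg (x : T) : nat := #|[set y | e x y]|.

Definition leaf (x : T) : bool := deg x == 1.

Definition leaves : {set T} := [set x | leaf x].

Definition subcubic : Prop := forall x, deg x <= 3.

Definition has_cycle : Prop :=
  exists c : seq T, [/\ 3 <= size c, uniq c & cycle e c].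

Definition is_tree : Prop :=
  [/\ 0 < #|T|, (forall x y, connect e x y) & ~ has_cycle].

Definition leaf_to_leaf_path (q : seq T) : bool :=
  if q is x :: s then
    [&& path e x s, uniq q, leaf x, leaf (last x s) & x != last x s]
  else false.

Definition vdisjoint (a b : seq T) : bool := all (fun x => x \notin b) a.

End Graphs.

(* Main.v *)
Require Import Defs.
From mathcomp Require Import all_boot.
From mathcomp Require Import zify.
From Stdlib Require Import Classical.
Set Implicit Arguments. Unset Strict Implicit. Unset Printing Implicit Defensive.

Section Main.
Variables (T : finType) (e : rel T).
Hypotheses (e_sym : symmetric e) (e_irr : irreflexive e).

Definition eS (S : {set T}) : rel T := fun x y => [&& x \in S, y \in S & e x y].

Lemma eS_sym S : symmetric (eS S).
Proof. by move=> x y; rewrite /eS e_sym; do 2 case: (_ \in S). Qed.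

Lemma eS_irr S : irreflexive (eS S).
Proof. by move=> x; rewrite /eS e_irr !andbF. Qed.

Lemma eS_sub (S S' : {set T}) : S' \subset S -> subrel (eS S') (eS S).
Proof.
move=> /subsetP sub x y /and3P[xS yS exy].
by rewrite /eS (sub _ xS) (sub _ yS) exy.
Qed.

Lemma deg_mono (S S' : {set T}) x : S' \subset S -> deg (eS S') x <= deg (eS S) x.
Proof.
move=> sub; apply: subset_leq_card; apply/subsetP => y; rewrite !inE.
exact: eS_sub.
Qed.

Lemma deg_drop (S : {set T}) v u : eS S u v -> deg (eS (S :\ v)) u < deg (eS S) u.
Proof.
move=> uv; apply: proper_card; apply/properP; split.
  by apply/subsetP => y; rewrite !inE; apply: eS_sub; apply: subsetDl.
by exists v; rewrite !inE // /eS !inE eqxx /= andbF.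
Qed.

Definition acyc (S : {set T}) := ~ has_cycle (eS S).
Definition conn (S : {set T}) := forall x y, x \in S -> y \in S -> connect (eS S) x y.

Lemma acyc_sub (S S' : {set T}) : S' \subset S -> acyc S -> acyc S'.
Proof.
move=> sub H [c [h1 h2 h3]]; apply: H; exists c; split => //.
exact: sub_cycle (eS_sub sub) _ h3.
Qed.

Lemma nochord (S : {set T}) x s u : acyc S -> path (eS S) x s -> uniq (x :: s) ->
  u \in s -> eS S x u -> u = head x s.
Proof.
move=> ac pth un us exu; case/splitPr: us pth un => p1 p2.
case: p1 => [|y p1] pth un; first by []. exfalso; apply: ac.
exists (x :: rcons (y :: p1) u); split.
- by rewrite /= size_rcons.
- apply: (subseq_uniq _ un); rewrite -cats1 -!cat_cons.
  apply: cat_subseq => //; by rewrite /= eqxx sub0seq.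
- rewrite /cycle rcons_path rcons_path /= last_rcons.
  move: pth; rewrite cat_path /= => /and3P[-> -> _].
  by rewrite eS_sym exu.
Qed.

Definition valid (S : {set T}) (q : seq T) :=
  if q is x :: s then [&& x \in S, path (eS S) x s & uniq q] else false.

Lemma valid_size (S : {set T}) q : valid S q -> size q <= #|T|.
Proof.
case: q => [|x s] // /and3P[_ _ un].
by rewrite -(card_uniqP un) max_card.
Qed.

Lemma exmax (S : {set T}) x : x \in S ->
  exists q, valid S q /\ forall q', valid S q' -> size q' <= size q.
Proof.
move=> xS.
suff H : forall m q, valid S q -> #|T| - m <= size q ->
  exists q, valid S q /\ forall q', valid S q' -> size q' <= size q.
  by apply: (H #|T| [:: x]); rewrite /valid /= ?xS // subnn.
elim=> [|m IH] q vq hq.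
  exists q; split => // q' vq'; apply: leq_trans (valid_size vq') _.
  by rewrite subn0 in hq.
case: (classic (exists q', valid S q' /\ size q < size q')).
  by move=> [q' [vq' lt]]; apply: (IH q') => //; lia.
move=> nex; exists q; split => // q' vq'; rewrite leqNgt; apply/negP => lt.
by apply: nex; exists q'.
Qed.

Lemma conn_remove (S : {set T}) v : conn S -> v \in S -> deg (eS S) v <= 1 -> conn (S :\ v).
Proof.
move=> cS vS dv x y; rewrite !inE => /andP[xv xS] /andP[yv yS].
move: (cS x y xS yS) => /connectP [p pth ly].
move: yv; rewrite ly; case: (shortenP pth) => p' pth' un' _ yv.
have vp : v \notin p'.
  apply/negP => vp; case/splitPr: vp pth' un' yv => p1 p2.
  rewrite last_cat /=; case: p2 => [|z p2] /=; first by rewrite eqxx.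
  move=> pth2 un _.
  move: pth2; rewrite cat_path /= => /and4P[_ av vz _].
  move: un => /andP[xn]; rewrite cat_uniq => /and3P[_ hh _].
  have zn : z \notin x :: p1.
    rewrite inE negb_or; apply/andP; split.
      by apply: contraNneq xn => <-; rewrite mem_cat !inE eqxx !orbT.
    by apply: contra hh => zin; apply/hasP; exists z; rewrite ?inE ?eqxx ?orbT.
  have az : last x p1 != z by apply: contraNneq zn => <-; apply: mem_last.
  have : 2 <= deg (eS S) v.
    rewrite /deg; have := cards2 (last x p1) z; rewrite az => <-.
    apply: subset_leq_card; apply/subsetP => t; rewrite !inE.
    by case/orP => /eqP ->; rewrite ?vz // eS_sym.
  by rewrite leqNgt ltnS dv.
apply/connectP; exists p' => //.
apply: (sub_in_path (P := [pred z | z != v])) pth'.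
  move=> a b; rewrite !inE /eS => av bv /and3P[aS bS eab].
  by rewrite !inE av aS bv bS eab.
apply/allP => z; rewrite inE => /orP[/eqP -> // | zp]; rewrite inE.
by apply: contraNneq vp => <-.
Qed.


Definition tp (S L : {set T}) (q : seq T) :=
  if q is x :: s then
    [&& path (eS S) x s, uniq q, x \in L, last x s \in L & x != last x s]
  else false.

Lemma path_in (S : {set T}) x s : path (eS S) x s -> {subset s <= S}.
Proof.
elim: s x => [|y s IH] x //= /andP[/and3P[_ yS _] pth] z.
by rewrite inE => /orP[/eqP->//|]; apply: IH pth z.
Qed.

Lemma tp_in (S L : {set T}) q z : L \subset S -> tp S L q -> z \in q -> z \in S.
Proof.
move=> /subsetP LS; case: q => [|x s] // /and5P[pth _ xL _ _].
by rewrite inE => /orP[/eqP->|]; [exact: LS | exact: path_in pth z].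
Qed.

Lemma tp_sub (S L S' L' : {set T}) q : S' \subset S -> L' \subset L ->
  tp S' L' q -> tp S L q.
Proof.
move=> sS /subsetP sL; case: q => [|x s] // /and5P[pth un xL lL ne].
by rewrite /tp (sub_path (eS_sub sS) pth) un (sL _ xL) (sL _ lL) ne.
Qed.

Definition ext (x0 x1 : T) (q : seq T) :=
  if q is x :: s then
    (if x == x1 then x0 :: q else if last x s == x1 then rcons q x0 else q)
  else q.

Lemma ext_mem x0 x1 q z : z \in ext x0 x1 q -> z \in q \/ (z = x0 /\ x1 \in q).
Proof.
case: q => [|x s] //=.
case: ifP => [/eqP hx|_].
  rewrite inE => /orP [/eqP->|zq]; [right; split=>//; by rewrite -hx mem_head | by left].
case: ifP => [/eqP hl|_]; last by left.
rewrite -rcons_cons mem_rcons inE => /orP[/eqP->|]; last by left.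
by right; split => //; rewrite -hl mem_last.
Qed.

Lemma ext_disj x0 x1 q r : x0 \notin q -> x0 \notin r -> vdisjoint q r ->
  vdisjoint (ext x0 x1 q) (ext x0 x1 r).
Proof.
move=> q0 r0 /allP dqr; apply/allP => z /ext_mem [zq|[-> x1q]];
  apply/negP => /ext_mem [zr|[zx x1r]].
- by move: (dqr z zq); rewrite zr.
- by move: q0; rewrite -zx zq.
- by rewrite zr in r0.
- by move: (dqr x1 x1q); rewrite x1r.
Qed.

Lemma ext_tp (S L : {set T}) x0 x1 q : x0 \in L -> eS S x0 x1 ->
  x0 \notin q -> tp (S :\ x0) (x1 |: (L :\ x0)) q -> tp S L (ext x0 x1 q).
Proof.
move=> x0L ex01; case: q => [|x s] // hq0 /and5P[pth un xL lL ne].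
have pthS : path (eS S) x s := sub_path (eS_sub (subsetDl S [set x0])) pth.
rewrite /ext; case: ifP => [/eqP hx | hx].
  apply/and5P; split.
  - by rewrite /= pthS hx ex01.
  - by rewrite cons_uniq hq0 un.
  - done.
  - by move: lL; rewrite /= !inE -hx eq_sym (negbTE ne) /= => /andP[_ ->].
  - by rewrite /=; apply: contraNneq hq0 => ->; exact: mem_last.
case: ifP => [/eqP hl | hl].
  rewrite rcons_cons; apply/and5P; split.
  - by rewrite rcons_path hl eS_sym ex01 pthS.
  - by rewrite -rcons_cons rcons_uniq hq0 un.
  - by move: xL; rewrite !inE hx /= => /andP[_ ->].
  - by rewrite last_rcons.
  - by rewrite last_rcons; apply: contraNneq hq0 => <-; exact: mem_head.
apply/and5P; split => //.
- by move: xL; rewrite !inE hx /= => /andP[_ ->].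
- by move: lL; rewrite !inE hl /= => /andP[_ ->].
Qed.

Lemma add_path (S L S' L' : {set T}) Q P : S' \subset S -> L' \subset L ->
  L' \subset S' -> tp S L Q -> (forall z, z \in Q -> z \notin S') ->
  all (tp S' L') P -> pairwise (@vdisjoint T) P ->
  all (tp S L) (Q :: P) && pairwise (@vdisjoint T) (Q :: P).
Proof.
move=> sS sL LS tQ QS aP pP; rewrite /= tQ pP andbT /=.
apply/andP; split; first by apply: sub_all aP => q; apply: tp_sub.
apply/allP => q qP; apply/allP => z zQ; apply/negP => zq.
by move: (QS z zQ); rewrite (tp_in LS (allP aP q qP) zq).
Qed.


Lemma degs (S S' L L' : {set T}) : S' \subset S -> L' \subset L ->
  (forall x, deg (eS S) x <= 3) -> (forall x, x \in L -> deg (eS S) x <= 2) ->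
  (forall x, deg (eS S') x <= 3) /\ (forall x, x \in L' -> deg (eS S') x <= 2).
Proof.
move=> sS /subsetP sL d3 d2; split => x.
  by apply: leq_trans (d3 x); apply: deg_mono.
by move=> /sL xL; apply: leq_trans (d2 x xL); apply: deg_mono.
Qed.

Lemma claim n : forall (S L : {set T}), #|S| <= n -> conn S -> acyc S ->
  (forall x, deg (eS S) x <= 3) -> L \subset S ->
  (forall x, x \in L -> deg (eS S) x <= 2) ->
  exists P, [/\ #|L|./2 <= size P, all (tp S L) P & pairwise (@vdisjoint T) P].
Proof.
elim: n => [|n IH] S L cS cnS acS scS LS dL.
  exists [::]; split => //.
  have : #|L| <= 0 by apply: leq_trans (subset_leq_card LS) cS.
  by rewrite leqn0 => /eqP ->.
case: (leqP #|L| 1) => [small|big].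
  by exists [::]; split => //; move: small; case: #|L| => [|[|]].
case: (classic (exists v, [/\ v \in S, v \notin L & deg (eS S) v <= 1])).
  move=> [v [vS vL dv]].
  have c1 : #|S :\ v| <= n by move: cS; rewrite (cardsD1 v S) vS.
  have LS1 : L \subset S :\ v.
    apply/subsetP => z zL; rewrite !inE (subsetP LS _ zL) andbT.
    by apply: contraNneq vL => <-.
  have [d3 d2] := degs (subsetDl S [set v]) (subxx L) scS dL.
  have [P [h1 h2 h3]] := IH (S :\ v) L c1 (conn_remove cnS vS dv)
     (acyc_sub (subsetDl _ _) acS) d3 LS1 d2.
  exists P; split => //; apply: sub_all h2 => q; apply: tp_sub => //.
  exact: subsetDl.
move=> nov.
have [x xL] : exists x, x \in L by apply/card_gt0P; exact: ltnW big.
have xS := subsetP LS x xL.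
have [q [vq mq]] := exmax xS.
case: q vq mq => [|x0 s] // /and3P[x0S pth un] mq.
have F1 : forall u, eS S x0 u -> u = head x0 s.
  move=> u xu; case us: (u \in s); first exact: nochord acS pth un us xu.
  exfalso.
  have : size (u :: x0 :: s) <= size (x0 :: s).
    apply: mq; apply/and3P; split.
    - by case/and3P: xu.
    - by rewrite /= eS_sym xu pth.
    - rewrite cons_uniq un andbT inE negb_or us andbT.
      by apply/eqP => ux; move: xu; rewrite ux eS_irr.
  by rewrite /=; lia.
case: s pth un mq F1 => [|x1 s'] pth un mq F1.
  have allx : forall y, y \in S -> y = x0.
    move=> y yS; move: (cnS x0 y x0S yS) => /connectP [[|z p] /= pz ->] //.
    case/andP: pz => xz _; have /= zx := F1 z xz.
    by move: xz; rewrite zx eS_irr.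
  exfalso; have : #|L| <= 1.
    apply: leq_trans (subset_leq_card LS) _; rewrite -(cards1 x0).
    apply: subset_leq_card; apply/subsetP => y yS; by rewrite inE (allx y yS).
  by rewrite leqNgt big.
have ex01 : eS S x0 x1 by case/andP: pth.
have x1S : x1 \in S by case/and3P: ex01.
have x01 : x0 != x1 by apply: contraTneq ex01 => <-; rewrite eS_irr.
have x10 : x1 != x0 by rewrite eq_sym.
have dx0 : deg (eS S) x0 <= 1.
  rewrite /deg -(cards1 x1); apply: subset_leq_card.
  by apply/subsetP => u; rewrite inE => xu; rewrite inE (F1 u xu).
have x0L : x0 \in L.
  case: (boolP (x0 \in L)) => // x0L; exfalso; apply: nov; by exists x0.
have cn1 : conn (S :\ x0) := conn_remove cnS x0S dx0.
have c1 : #|S| = (#|S :\ x0|).+1 by rewrite (cardsD1 x0 S) x0S.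
have x1S1 : x1 \in S :\ x0 by rewrite !inE x10 x1S.
have dx1' : deg (eS (S :\ x0)) x1 < deg (eS S) x1 by apply: deg_drop; rewrite eS_sym.
case x1L: (x1 \in L).
  have dx1 : deg (eS (S :\ x0)) x1 <= 1.
    by rewrite -ltnS; apply: leq_trans dx1' (dL x1 x1L).
  have cn2 := conn_remove cn1 x1S1 dx1.
  have c2 : #|S :\ x0| = (#|S :\ x0 :\ x1|).+1 by rewrite (cardsD1 x1 (S :\ x0)) x1S1.
  have cL : #|L| = (#|L :\ x0 :\ x1|).+2.
    by rewrite (cardsD1 x0 L) x0L (cardsD1 x1 (L :\ x0)) !inE x10 x1L.
  have S2S : S :\ x0 :\ x1 \subset S by apply: subset_trans (subsetDl _ _) (subsetDl _ _).
  have L2L : L :\ x0 :\ x1 \subset L by apply: subset_trans (subsetDl _ _) (subsetDl _ _).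
  have L2S2 : L :\ x0 :\ x1 \subset S :\ x0 :\ x1.
    apply/subsetP => z; rewrite !inE => /and3P[z1 z0 zL].
    by rewrite z1 z0 (subsetP LS _ zL).
  have [d3 d2] := degs S2S L2L scS dL.
  have c3 : #|S :\ x0 :\ x1| <= n by move: cS; rewrite c1 c2 ltnS => /ltnW.
  have [P [h1 h2 h3]] := IH _ _ c3 cn2 (acyc_sub S2S acS) d3 L2S2 d2.
  exists ([:: x0; x1] :: P).
  have tQ : tp S L [:: x0; x1] by rewrite /tp /= ex01 x0L x1L !inE x01.
  have QS : forall z, z \in [:: x0; x1] -> z \notin S :\ x0 :\ x1.
    by move=> z; rewrite !inE => /orP[] /eqP ->; rewrite eqxx ?andbF.
  have /andP[a1 a2] := add_path S2S L2L L2S2 tQ QS h2 h3.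
  by split => //; rewrite cL /= ltnS.
case: (leqP (deg (eS S) x1) 2) => [dx1|dx1].
  (* x1 becomes a terminal *)
  have cL : #|x1 |: (L :\ x0)| = #|L|.
    by rewrite cardsU1 (cardsD1 x0 L) x0L !inE x1L andbF.
  have L1S1 : x1 |: (L :\ x0) \subset S :\ x0.
    apply/subsetP => z; rewrite !inE => /orP[/eqP -> | /andP[z0 zL]].
      by rewrite x10 x1S.
    by rewrite z0 (subsetP LS _ zL).
  have d3 : forall x, deg (eS (S :\ x0)) x <= 3.
    by move=> z; apply: leq_trans (scS z); apply: deg_mono; apply: subsetDl.
  have d2 : forall x, x \in x1 |: (L :\ x0) -> deg (eS (S :\ x0)) x <= 2.
    move=> z; rewrite !inE => /orP[/eqP -> | /andP[_ zL]].
      by apply: leq_trans dx1; apply: ltnW.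
    by apply: leq_trans (dL z zL); apply: deg_mono; apply: subsetDl.
  have c3 : #|S :\ x0| <= n by move: cS; rewrite c1 ltnS.
  have [P [h1 h2 h3]] := IH _ _ c3 cn1 (acyc_sub (subsetDl _ _) acS) d3 L1S1 d2.
  have q0 : forall q, q \in P -> x0 \notin q.
    move=> q qP; apply/negP => /(tp_in L1S1 (allP h2 q qP)).
    by rewrite !inE eqxx.
  exists (map (ext x0 x1) P); split.
  - by rewrite size_map -cL.
  - rewrite all_map; apply/allP => q qP /=.
    by apply: ext_tp => //; [exact: q0 | exact: allP h2 q qP].
  - rewrite pairwise_map.
    apply: (sub_in_pairwise (P := [pred q | x0 \notin q])) h3.
      by move=> a b; rewrite !inE => a0 b0; apply: ext_disj.
    by apply/allP => q qP; rewrite inE; apply: q0.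
move: pth un => /andP[_ pth'] /andP[_ un'].
have [w] : exists w, w \in [set y | eS S x1 y] :\ x0 :\ head x1 s'.
  apply/card_gt0P.
  have e1 := cardsD1 x0 [set y | eS S x1 y].
  have e2 := cardsD1 (head x1 s') ([set y | eS S x1 y] :\ x0).
  have b1 := leq_b1 (x0 \in [set y | eS S x1 y]).
  have b2 := leq_b1 (head x1 s' \in [set y | eS S x1 y] :\ x0).
  move: dx1; rewrite /deg e1 e2.
  move: (x0 \in _) (head x1 s' \in _) b1 b2 => c d.
  have key : forall k, 2 < k.+1 -> 0 < k by case.
  case: c; case: d => // _ _.
  1-3: by case: (card.body _) => [|k].
rewrite !inE => /and3P[wh wx0 x1w].
have w_notin : w \notin x1 :: s'.
  rewrite inE negb_or; apply/andP; split.
    by apply: contraTneq x1w => ->; rewrite eS_irr.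
  apply/negP => ws; move: (nochord acS pth' un' ws x1w) => wh'.
  by rewrite wh' eqxx in wh.
have dw : deg (eS S) w <= 1.
  rewrite /deg -(cards1 x1); apply: subset_leq_card; apply/subsetP => u.
  rewrite !inE => wu.
  have pw : path (eS S) w (x1 :: s') by apply/andP; split => //; rewrite eS_sym.
  have uw : uniq (w :: x1 :: s') by rewrite cons_uniq w_notin; exact: un'.
  case ux: (u \in x1 :: s').
    by move: (nochord acS pw uw ux wu) => /= ->.
  exfalso; case: (eqVneq u x0) => [ux0|ux0].
    move: wu; rewrite ux0 eS_sym => /F1 /= wx1.
    by move: w_notin; rewrite wx1 mem_head.
  have : size (u :: w :: x1 :: s') <= size (x0 :: x1 :: s').
    apply: mq; apply/and3P; split.
    - by case/and3P: wu.
    - apply/andP; split; first by rewrite eS_sym.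
      by apply/andP; split => //; rewrite eS_sym.
    - rewrite cons_uniq uw andbT inE negb_or ux andbT.
      by apply/eqP => uw'; move: wu; rewrite uw' eS_irr.
  by rewrite /= !ltnS ltnn.
have wS : w \in S by case/and3P: x1w => _ -> _.
have wL : w \in L.
  case: (boolP (w \in L)) => // wL; exfalso; apply: nov; by exists w.
have wS1 : w \in S :\ x0 by rewrite !inE wx0 wS.
have dw1 : deg (eS (S :\ x0)) w <= 1.
  by apply: leq_trans dw; apply: deg_mono; apply: subsetDl.
have cn2 := conn_remove cn1 wS1 dw1.
have x1w' : x1 != w by apply: contraNneq w_notin => <-; exact: mem_head.
have x1S2 : x1 \in S :\ x0 :\ w by rewrite !inE x1w' x10 x1S.
have dx2 : deg (eS (S :\ x0 :\ w)) x1 < deg (eS (S :\ x0)) x1.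
  by apply: deg_drop; rewrite /eS x1S1 wS1; case/and3P: x1w.
have dx1'' : deg (eS (S :\ x0 :\ w)) x1 <= 1.
  have h := scS x1; clear -dx1' dx2 h; lia.
have cn3 := conn_remove cn2 x1S2 dx1''.
have c2 : #|S :\ x0| = (#|S :\ x0 :\ w|).+1 by rewrite (cardsD1 w (S :\ x0)) wS1.
have c3' : #|S :\ x0 :\ w| = (#|S :\ x0 :\ w :\ x1|).+1.
  by rewrite (cardsD1 x1 (S :\ x0 :\ w)) x1S2.
have wx0' : w != x0 := wx0.
have cL : #|L| = (#|L :\ x0 :\ w|).+2.
  by rewrite (cardsD1 x0 L) x0L (cardsD1 w (L :\ x0)) !inE wx0' wL.
have S3S : S :\ x0 :\ w :\ x1 \subset S.
  by apply: subset_trans (subsetDl _ _) _; apply: subset_trans (subsetDl _ _) (subsetDl _ _).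
have L3L : L :\ x0 :\ w \subset L by apply: subset_trans (subsetDl _ _) (subsetDl _ _).
have L3S3 : L :\ x0 :\ w \subset S :\ x0 :\ w :\ x1.
  apply/subsetP => z; rewrite !inE => /and3P[z1 z0 zL].
  rewrite z1 z0 (subsetP LS _ zL) !andbT.
  by apply/eqP => zx1; rewrite -zx1 zL in x1L.
have [d3 d2] := degs S3S L3L scS dL.
have c4 : #|S :\ x0 :\ w :\ x1| <= n.
  by move: cS; rewrite c1 c2 c3' !ltnS => /ltnW /ltnW.
have [P [h1 h2 h3]] := IH _ _ c4 cn3 (acyc_sub S3S acS) d3 L3S3 d2.
exists ([:: x0; x1; w] :: P).
have tQ : tp S L [:: x0; x1; w].
  rewrite /tp /= ex01 x1w x0L wL !inE negb_or x01 eq_sym wx0' x1w' /=.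
  by [].
have QS : forall z, z \in [:: x0; x1; w] -> z \notin S :\ x0 :\ w :\ x1.
  by move=> z; rewrite !inE => /or3P[] /eqP ->; rewrite eqxx ?andbF.
have /andP[a1 a2] := add_path S3S L3L L3S3 tQ QS h2 h3.
by split => //; rewrite cL /= ltnS.
Qed.

End Main.

Theorem lemma5 (p : nat) (T : finType) (e : rel T)
    (e_sym : symmetric e) (e_irr : irreflexive e)
    (tree : is_tree e) (sc : subcubic e)
    (hp : #|leaves e| = p) :
  exists P : seq (seq T),
    [/\ size P = p./2,
        all (leaf_to_leaf_path e) P &
        pairwise (@vdisjoint T) P].
Proof.
case: tree => [T0 conT acT].
have eT : eS e setT =2 e by move=> x y; rewrite /eS !inE.
have degT : forall x, deg (eS e setT) x = deg e x.
  by move=> x; rewrite /deg; apply: eq_card => y; rewrite !inE eT.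
have cn : conn e setT by move=> x y _ _; rewrite (eq_connect eT).
have ac : acyc e setT.
  move=> [c [h1 h2 h3]]; apply: acT; exists c; split => //.
  by rewrite -(eq_cycle eT).
have [||P [h1 h2 h3]] := @claim T e e_sym e_irr #|T| setT (leaves e)
  (max_card _) cn ac _ (subsetT _) _.
- by move=> x; rewrite degT sc.
- by move=> x; rewrite inE degT /leaf => /eqP ->.
exists (take p./2 P); split.
- by rewrite size_takel // -hp.
- apply/allP => q /mem_take qP; move: (allP h2 q qP).
  case: q {qP} => [|x s] // /and5P[pth un xL lL ne].
  rewrite (eq_path eT) in pth; rewrite !inE in xL lL.
  by rewrite /leaf_to_leaf_path pth un xL lL ne.
- by apply: subseq_pairwise h3; exact: take_subseq.
Qed.
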